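(* Let $A\in\mathbb{R}^{m\times m}$ with $S_{\max}(A)>0$, $B\in\mathbb{R}^{m\times n}$, $k>0$, and let $P$ be a symmetric positive definite solution of $A^{\mathrm T}P+PA-2PBB^{\mathrm T}P+kI_m=0$. Let $x_g\in\mathbb{R}^m$ with $\|x_g\|\le\overline{x}_g$, and let $d:[0,\infty)\to\mathbb{R}^m$ be continuous with $\|d(t)\|\le\overline{d}$ for all $t\ge0$. Let $0=t_0<t_1<t_2<\cdots$ be servicing instants with $t_s\to\infty$. Consider the system $$\dot x(t)=Ax(t)+Bu(t)+d(t),\qquad u(t)=B^{\mathrm T}P\,(x_g-\hat x(t)),$$ $$\dot{\hat x}(t)=-A(x_g-\hat x(t))+Bu(t)\ \text{ for } t\in[t_s,t_{s+1}),\qquad \hat x(t_s)=x(t_s)\ \text{ for all } s\ge0,$$ with $x$ continuous and $\hat x$ right-continuous, and define $e(t)=x_g-x(t)$. Let $V_T>0$, $\kappa=S_{\max}(A)\overline{x}_g+\overline{d}$, and suppose that for every $s\ge0$, $$t_{s+1}-t_s\le\frac{1}{S_{\max}(A)}\ln\!\left(\frac{V_TS_{\max}(A)}{\kappa}+1\right).$$ Then, with $\rho\triangleq 2\overline{d}S_{\max}(P)+2V_TS_{\max}(PBB^{\mathrm T}P)+2S_{\max}(PA)\overline{x}_g$, for all $t\ge0$, $$\|e(t)\|\le\frac{\lambda_{\max}(P)\rho}{\lambda_{\min}(P)k}\left(1-e^{-\frac{k}{2\lambda_{\max}(P)}t}\right)+\sqrt{\frac{\lambda_{\max}(P)}{\lambda_{\min}(P)}}\,\|e(0)\|\,e^{-\frac{k}{2\lambda_{\max}(P)}t};$$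 moreover $e$, $x_g-\hat x$ and $u$ are bounded on $[0,\infty)$. *)

(* Defs.v *)
From HB Require Import structures.
From mathcomp Require Import all_boot all_order all_algebra.
From mathcomp Require Import all_classical all_reals all_analysis.
Set Implicit Arguments. Unset Strict Implicit. Unset Printing Implicit Defensive.
Import Order.TTheory GRing.Theory Num.Theory.
Import numFieldNormedType.Exports.
Local Open Scope ring_scope.
Local Open Scope classical_set_scope.

Definition vnorm {R : realType} {m : nat} (v : 'cV[R]_m) : R :=
  Num.sqrt (\sum_(i < m) v i 0 ^+ 2).

(* Largest / smallest (real) eigenvalue of a square matrix
   (used for symmetric matrices, whose spectrum is real). *)
Definition lambda_max {R : realType} {m : nat} (M : 'M[R]_m) : R :=
  sup [set a : R | eigenvalue M a].
Definition lambda_min {R : realType} {m : nat} (M : 'M[R]_m) : R :=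
  inf [set a : R | eigenvalue M a].

Definition Smax {R : realType} {p q : nat} (M : 'M[R]_(p, q)) : R :=
  Num.sqrt (lambda_max (M^T *m M)).

(* Main.v *)
Require Import Defs.
From HB Require Import structures.
From mathcomp Require Import all_boot all_order all_algebra.
From mathcomp Require Import all_classical all_reals all_analysis.
From mathcomp Require Import ring lra.
Import Order.TTheory GRing.Theory Num.Theory.
Import numFieldNormedType.Exports.
Local Open Scope ring_scope.
Local Open Scope classical_set_scope.
Set Implicit Arguments. Unset Strict Implicit. Unset Printing Implicit Defensive.

Section LA.
Variable R : realType.

Definition dotv {p : nat} (v w : 'cV[R]_p) : R := (v^T *m w) 0 0.

Lemma dotvE p (v w : 'cV[R]_p) : dotv v w = \sum_i v i 0 * w i 0.
Proof. by rewrite /dotv mxE; apply: eq_bigr => i _; rewrite mxE. Qed.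

Lemma dotvC p (v w : 'cV[R]_p) : dotv v w = dotv w v.
Proof. by rewrite !dotvE; apply: eq_bigr => i _; rewrite mulrC. Qed.

Lemma dotvDl p (v1 v2 w : 'cV[R]_p) : dotv (v1 + v2) w = dotv v1 w + dotv v2 w.
Proof. rewrite !dotvE -big_split /=; apply: eq_bigr => i _; rewrite !mxE; ring. Qed.
Lemma dotvZl p a (v w : 'cV[R]_p) : dotv (a *: v) w = a * dotv v w.
Proof. rewrite !dotvE mulr_sumr; apply: eq_bigr => i _; rewrite !mxE; ring. Qed.
Lemma dotvNl p (v w : 'cV[R]_p) : dotv (- v) w = - dotv v w.
Proof. rewrite !dotvE -sumrN; apply: eq_bigr => i _; rewrite !mxE; ring. Qed.
Lemma dotvBl p (v1 v2 w : 'cV[R]_p) : dotv (v1 - v2) w = dotv v1 w - dotv v2 w.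
Proof. by rewrite dotvDl dotvNl. Qed.
Lemma dotv0l p (w : 'cV[R]_p) : dotv 0 w = 0.
Proof. rewrite dotvE big1 // => i _; by rewrite mxE mul0r. Qed.
Lemma dotvDr p (v1 v2 w : 'cV[R]_p) : dotv w (v1 + v2) = dotv w v1 + dotv w v2.
Proof. by rewrite !(dotvC w) dotvDl. Qed.
Lemma dotvZr p a (v w : 'cV[R]_p) : dotv w (a *: v) = a * dotv w v.
Proof. by rewrite !(dotvC w) dotvZl. Qed.
Lemma dotvNr p (v w : 'cV[R]_p) : dotv w (- v) = - dotv w v.
Proof. by rewrite !(dotvC w) dotvNl. Qed.
Lemma dotvBr p (v1 v2 w : 'cV[R]_p) : dotv w (v1 - v2) = dotv w v1 - dotv w v2.
Proof. by rewrite !(dotvC w) dotvBl. Qed.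
Lemma dotv0r p (w : 'cV[R]_p) : dotv w 0 = 0.
Proof. by rewrite dotvC dotv0l. Qed.

Lemma dotv_mulmx p q (M : 'M[R]_(p, q)) v w : dotv v (M *m w) = dotv (M^T *m v) w.
Proof. by rewrite /dotv trmx_mul trmxK mulmxA. Qed.

Lemma dotvv_ge0 p (v : 'cV[R]_p) : 0 <= dotv v v.
Proof. rewrite dotvE; apply: sumr_ge0 => i _; rewrite -expr2; exact: sqr_ge0. Qed.

Lemma dotvv_eq0 p (v : 'cV[R]_p) : dotv v v = 0 -> v = 0.
Proof.
rewrite dotvE => /eqP; rewrite psumr_eq0 => [/allP H|i _]; last first.
  by rewrite -expr2 sqr_ge0.
apply/matrixP => i j; rewrite (ord1 j) [RHS]mxE.
by have := H i (mem_index_enum i); rewrite /= -expr2 sqrf_eq0 => /eqP.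
Qed.

Lemma vnorm_dot p (v : 'cV[R]_p) : vnorm v = Num.sqrt (dotv v v).
Proof. by rewrite /vnorm dotvE; congr Num.sqrt; apply: eq_bigr => i _; rewrite expr2. Qed.

Lemma vnorm_ge0 p (v : 'cV[R]_p) : 0 <= vnorm v.
Proof. by rewrite vnorm_dot sqrtr_ge0. Qed.

Lemma vnorm_sq p (v : 'cV[R]_p) : vnorm v ^+ 2 = dotv v v.
Proof. by rewrite vnorm_dot sqr_sqrtr // dotvv_ge0. Qed.

Lemma vnorm0 p : vnorm (0 : 'cV[R]_p) = 0.
Proof. by rewrite vnorm_dot dotv0l sqrtr0. Qed.

Lemma vnorm_eq0 p (v : 'cV[R]_p) : vnorm v = 0 -> v = 0.
Proof. by move=> h; apply: dotvv_eq0; rewrite -vnorm_sq h expr0n. Qed.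

Lemma CS p (v w : 'cV[R]_p) : `|dotv v w| <= vnorm v * vnorm w.
Proof.
have [v0|] := eqVneq (vnorm v) 0.
  by rewrite (vnorm_eq0 v0) dotv0l normr0 vnorm0 mul0r.
have [w0|] := eqVneq (vnorm w) 0.
  by rewrite (vnorm_eq0 w0) dotv0r normr0 vnorm0 mulr0.
move=> wn vn.
have a0 : 0 < vnorm v by rewrite lt_def vn vnorm_ge0.
have b0 : 0 < vnorm w by rewrite lt_def wn vnorm_ge0.
have h1 := dotvv_ge0 (vnorm w *: v - vnorm v *: w).
have h2 := dotvv_ge0 (vnorm w *: v + vnorm v *: w).
rewrite !(dotvDl, dotvBl, dotvDr, dotvBr, dotvZl, dotvZr, dotvNl, dotvNr) in h1 h2.
rewrite -!vnorm_sq (dotvC w v) in h1 h2.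
set a := vnorm v in h1 h2 a0 *; set b := vnorm w in h1 h2 b0 *; set c := dotv v w in h1 h2 *.
have ab0 : 0 < a * b by rewrite mulr_gt0.
have E1 : 0 <= (a * b) * (a * b - c) by nra.
have E2 : 0 <= (a * b) * (a * b + c) by nra.
rewrite pmulr_rge0 // subr_ge0 in E1; rewrite pmulr_rge0 // in E2.
rewrite ler_norml E1 andbT; lra.
Qed.

Lemma vnormZ p a (v : 'cV[R]_p) : vnorm (a *: v) = `|a| * vnorm v.
Proof.
by rewrite !vnorm_dot dotvZl dotvZr mulrA -expr2 sqrtrM ?sqr_ge0 // sqrtr_sqr.
Qed.

Lemma vnormN p (v : 'cV[R]_p) : vnorm (- v) = vnorm v.
Proof. by rewrite -scaleN1r vnormZ normrN normr1 mul1r. Qed.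

Lemma vnormD p (v w : 'cV[R]_p) : vnorm (v + w) <= vnorm v + vnorm w.
Proof.
have h := CS v w; rewrite ler_norml in h; case/andP: h => _ h.
rewrite [leLHS]vnorm_dot -[leRHS]ger0_norm ?addr_ge0 ?vnorm_ge0 //.
rewrite -sqrtr_sqr ler_sqrt ?sqr_ge0 //.
rewrite dotvDl !dotvDr (dotvC w v) -!vnorm_sq.
nra.
Qed.

Lemma vnormB p (v w : 'cV[R]_p) : vnorm (v - w) <= vnorm v + vnorm w.
Proof. by rewrite -(vnormN w) vnormD. Qed.

Lemma lin_quad (b c : R) : (forall t : R, t * b + t ^+ 2 * c <= 0) -> b = 0.
Proof.
suff H : forall b c : R, (forall t : R, t * b + t ^+ 2 * c <= 0) -> b <= 0.
  move=> h; apply/eqP; rewrite eq_le (H b c h) /= -oppr_le0.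
  apply: (H _ c) => t; have := h (- t); rewrite sqrrN; nra.
move=> {}b {}c h; rewrite leNgt; apply/negP => b0.
pose D := `|c| + 1.
have D0 : 0 < D by rewrite /D ltr_pwDr // normr_ge0.
pose t := b / (2 * D).
have t0 : 0 < t by rewrite /t divr_gt0 // mulr_gt0.
have tD : t * D = b / 2 by rewrite /t; field; rewrite gt_eqF.
have cn : - `|c| <= c by rewrite lerNl -normrN ler_norm.
have := h t; rewrite /D in tD; nra.
Qed.

Lemma cvg_sum_ord (T : Type) (F : set_system T) {FF : Filter F} n
    (f : 'I_n -> T -> R) (l : 'I_n -> R) :
  (forall i, f i @ F --> l i) -> (fun x => \sum_(i < n) f i x) @ F --> \sum_(i < n) l i.
Proof.
move=> h; rewrite -fct_sumE.
elim/big_ind2 : _ => //; first exact: cvg_cst.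
by move=> g1 l1 g2 l2 c1 c2; apply: cvgD.
Qed.

Lemma rayleigh_max p (S : 'M[R]_p) : (0 < p)%N -> S^T = S ->
  exists mu, exists2 v : 'cV[R]_p, v != 0 &
    S *m v = mu *: v /\ forall w, dotv w (S *m w) <= mu * dotv w w.
Proof.
move=> p0 Ssym.
pose sph := [set r : 'rV[R]_p | dotv r^T r^T = 1].
pose f := fun r : 'rV[R]_p => dotv r^T (S *m r^T).
have sph0 : sph !=set0.
  exists (\row_j ((j == Ordinal p0)%:R : R)).
  rewrite /sph /= dotvE (bigD1 (Ordinal p0)) //= big1 => [|j /negPf jn].
    by rewrite !mxE eqxx mulr1 addr0.
  by rewrite !mxE jn mulr0.
have gcont : continuous (fun r : 'rV[R]_p => dotv r^T r^T).
  have -> : (fun r : 'rV[R]_p => dotv r^T r^T) = (fun r => \sum_i r 0 i * r 0 i).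
    by apply/funext => r; rewrite dotvE; apply: eq_bigr => i _; rewrite !mxE.
  move=> r; apply: (@cvg_sum_ord _ (nbhs r)) => i; apply: cvgM; exact: coord_continuous.
have fcont : continuous f.
  have -> : f = (fun r => \sum_i r 0 i * \sum_j S i j * r 0 j).
    apply/funext => r; rewrite /f dotvE; apply: eq_bigr => i _; rewrite !mxE.
    by congr (_ * _); apply: eq_bigr => j _; rewrite !mxE.
  move=> r; apply: (@cvg_sum_ord _ (nbhs r)) => i; apply: cvgM; first exact: coord_continuous.
  apply: cvg_sum_ord => j; apply: cvgM; first exact: cvg_cst.
  exact: coord_continuous.
have csph : compact sph.
  apply: bounded_closed_compact; last first.
    have -> : sph = (fun r : 'rV[R]_p => dotv r^T r^T) @^-1` [set 1] by [].
    apply: (proj1 (continuous_closedP _) gcont).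
    apply: compact_closed; [exact: Rhausdorff | exact: compact_set1].
  exists 1; split => // M M1 r sr /=.
  have -> : `|r| = mx_norm r by []. rewrite mx_normrE.
  apply: bigmax_le; first by rewrite (le_trans ler01) // ltW.
  move=> [i j] _ /=; rewrite (ord1 i).
  have : r 0 j * r 0 j <= 1.
    rewrite -sr dotvE (bigD1 j) //= !mxE lerDl; apply: sumr_ge0 => l _.
    by rewrite !mxE -expr2 sqr_ge0.
  rewrite -expr2 -(@ler_sqrt R _ 1 ler01) sqrtr_sqr sqrtr1 => h.
  by rewrite (le_trans h) // ltW.
have [c cs cmax] := EVT_max_rV sph0 csph (continuous_subspaceT fcont).
have {}cs : dotv c^T c^T = 1 := set_mem cs.
pose mu := f c; pose v0 := c^T.
have bound : forall w, dotv w (S *m w) <= mu * dotv w w.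
  move=> w; have [->|wn0] := eqVneq w 0; first by rewrite mulmx0 !dotv0l mulr0.
  set nn := dotv w w.
  have nn0 : 0 < nn.
    rewrite lt_def dotvv_ge0 andbT; apply/eqP => /dotvv_eq0 h; by rewrite h eqxx in wn0.
  set s := Num.sqrt nn.
  have s0 : 0 < s by rewrite sqrtr_gt0.
  have s2 : s ^+ 2 = nn by rewrite sqr_sqrtr // ltW.
  have rs : sph (s^-1 *: w)^T.
    rewrite /sph /= trmxK dotvZl dotvZr -/nn -s2; field; exact: lt0r_neq0.
  have := cmax _ (mem_set rs); rewrite /f trmxK -scalemxAr dotvZl dotvZr.
  have -> : s^-1 * (s^-1 * dotv w (S *m w)) = dotv w (S *m w) / nn.
    by rewrite -s2; field; exact: lt0r_neq0.
  by rewrite ler_pdivrMr.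
have key : forall w t, t * (2 * (dotv w (S *m v0) - mu * dotv w v0)) +
    t ^+ 2 * (dotv w (S *m w) - mu * dotv w w) <= 0.
  move=> w t; have := bound (v0 + t *: w).
  rewrite mulmxDr -scalemxAr !(dotvDl, dotvDr, dotvZl, dotvZr).
  have e1 : dotv v0 (S *m w) = dotv w (S *m v0) by rewrite dotv_mulmx Ssym dotvC.
  have e2 : dotv v0 (S *m v0) = mu by [].
  rewrite e1 e2 cs (dotvC v0 w); nra.
exists mu, v0.
  by apply/eqP => h; move: cs; rewrite -/v0 h dotv0l => /eqP; rewrite eq_sym oner_eq0.
split => //.
apply/eqP; rewrite -subr_eq0; apply/eqP; apply: dotvv_eq0.
have := lin_quad (key (S *m v0 - mu *: v0)).
rewrite -dotvZr -dotvBr => /eqP; rewrite mulf_eq0 pnatr_eq0 /= => /eqP //.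
Qed.

Lemma eig_col p (S : 'M[R]_p) a (v : 'cV[R]_p) : S^T = S -> v != 0 ->
  S *m v = a *: v -> eigenvalue S a.
Proof.
move=> Ssym vn Sv; apply/eigenvalueP; exists v^T; last by rewrite trmx_eq0.
rewrite -{1}Ssym -trmx_mul Sv; apply/matrixP => i j; by rewrite !mxE.
Qed.

Lemma eig_row p (S : 'M[R]_p) a : S^T = S -> eigenvalue S a ->
  exists2 z : 'cV[R]_p, z != 0 & S *m z = a *: z.
Proof.
move=> Ssym /eigenvalueP [w wS wn]; exists w^T; first by rewrite trmx_eq0.
rewrite -{1}Ssym -trmx_mul wS; apply/matrixP => i j; by rewrite !mxE.
Qed.

Lemma dotv_pos p (v : 'cV[R]_p) : v != 0 -> 0 < dotv v v.
Proof.
move=> vn; rewrite lt_def dotvv_ge0 andbT; apply/eqP => /dotvv_eq0 h.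
by rewrite h eqxx in vn.
Qed.

Lemma lmax_char p (S : 'M[R]_p) mu (v : 'cV[R]_p) : S^T = S -> v != 0 ->
  S *m v = mu *: v -> (forall w, dotv w (S *m w) <= mu * dotv w w) ->
  lambda_max S = mu.
Proof.
move=> Ssym vn Sv bnd.
have Emu : [set a : R | eigenvalue S a] mu by exact: eig_col Sv.
have ub : ubound [set a : R | eigenvalue S a] mu.
  move=> a /= /(eig_row Ssym) [z zn Sz].
  have := bnd z; rewrite Sz dotvZr ler_pM2r //; exact: dotv_pos.
apply/eqP; rewrite eq_le; apply/andP; split.
  by apply: ge_sup => //; exists mu.
by apply: ub_le_sup => //; exists mu.
Qed.

Lemma lmin_char p (S : 'M[R]_p) mu (v : 'cV[R]_p) : S^T = S -> v != 0 ->
  S *m v = mu *: v -> (forall w, mu * dotv w w <= dotv w (S *m w)) ->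
  lambda_min S = mu.
Proof.
move=> Ssym vn Sv bnd.
have Emu : [set a : R | eigenvalue S a] mu by exact: eig_col Sv.
have lb : lbound [set a : R | eigenvalue S a] mu.
  move=> a /= /(eig_row Ssym) [z zn Sz].
  have := bnd z; rewrite Sz dotvZr ler_pM2r //; exact: dotv_pos.
apply/eqP; rewrite eq_le; apply/andP; split.
  by apply: ge_inf => //; exists mu.
by apply: lb_le_inf => //; exists mu.
Qed.

Lemma lmax_bound p (S : 'M[R]_p) : (0 < p)%N -> S^T = S ->
  forall w, dotv w (S *m w) <= lambda_max S * dotv w w.
Proof.
move=> p0 Ssym; have [mu [v vn [Sv bnd]]] := rayleigh_max p0 Ssym.
by rewrite (lmax_char Ssym vn Sv bnd).
Qed.

Lemma lmin_bound p (S : 'M[R]_p) : (0 < p)%N -> S^T = S ->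
  forall w, lambda_min S * dotv w w <= dotv w (S *m w).
Proof.
move=> p0 Ssym.
have Ssym' : (- S)^T = - S by rewrite linearN /= Ssym.
have [mu [v vn [Sv bnd]]] := rayleigh_max p0 Ssym'.
have Sv' : S *m v = (- mu) *: v.
  by rewrite scaleNr -Sv mulNmx opprK.
have bnd' : forall w, (- mu) * dotv w w <= dotv w (S *m w).
  move=> w; have := bnd w; rewrite mulNmx dotvNr; lra.
by rewrite (lmin_char Ssym vn Sv' bnd').
Qed.

Lemma lmin_pos p (S : 'M[R]_p) : (0 < p)%N -> S^T = S ->
  (forall v : 'cV[R]_p, v != 0 -> 0 < (v^T *m S *m v) 0 0) -> 0 < lambda_min S.
Proof.
move=> p0 Ssym pd.
have Ssym' : (- S)^T = - S by rewrite linearN /= Ssym.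
have [mu [v vn [Sv bnd]]] := rayleigh_max p0 Ssym'.
have Sv' : S *m v = (- mu) *: v by rewrite scaleNr -Sv mulNmx opprK.
have bnd' : forall w, (- mu) * dotv w w <= dotv w (S *m w).
  move=> w; have := bnd w; rewrite mulNmx dotvNr; lra.
rewrite (lmin_char Ssym vn Sv' bnd').
have := pd v vn; rewrite -mulmxA -/(dotv v (S *m v)) Sv' dotvZr.
by rewrite pmulr_lgt0 // dotv_pos.
Qed.

Lemma lmin_le_lmax p (S : 'M[R]_p) : (0 < p)%N -> S^T = S -> lambda_min S <= lambda_max S.
Proof.
move=> p0 Ssym; have [mu [v vn [Sv bnd]]] := rayleigh_max p0 Ssym.
have := lmin_bound p0 Ssym v; have := lmax_bound p0 Ssym v.
move=> h1 h2; have := le_trans h2 h1; rewrite ler_pM2r //; exact: dotv_pos.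
Qed.

Lemma Smax_bound p q (M : 'M[R]_(p, q)) (v : 'cV[R]_q) :
  vnorm (M *m v) <= Smax M * vnorm v.
Proof.
case: q M v => [|q] M v.
  have -> : M *m v = 0 by apply/matrixP => i j; rewrite !mxE big_ord0.
  by rewrite vnorm0 mulr_ge0 ?vnorm_ge0 // sqrtr_ge0.
have Ssym : (M^T *m M)^T = M^T *m M by rewrite trmx_mul trmxK.
have h := lmax_bound (ltn0Sn q) Ssym v.
have e : dotv (M *m v) (M *m v) = dotv v ((M^T *m M) *m v) by rewrite dotv_mulmx dotvC mulmxA.
rewrite /Smax !vnorm_dot [X in _ <= X]mulrC -sqrtrM ?dotvv_ge0 //.
have h2 : dotv (M *m v) (M *m v) <= dotv v v * lambda_max (M^T *m M) by rewrite e mulrC.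
rewrite ler_sqrt //; exact: le_trans (dotvv_ge0 _) h2.
Qed.

Lemma dot_bound p q (M : 'M[R]_(p, q)) (u : 'cV[R]_p) (v : 'cV[R]_q) :
  `|dotv u (M *m v)| <= vnorm u * (Smax M * vnorm v).
Proof.
apply: (le_trans (CS _ _)); apply: ler_wpM2l; first exact: vnorm_ge0.
exact: Smax_bound.
Qed.
End LA.


Section AN.
Variable R : realType.
Implicit Types (f g : R -> R) (t a b c : R).

Lemma dD f g t a b : is_derive t 1 f a -> is_derive t 1 g b ->
  is_derive t 1 (fun r => f r + g r) (a + b).
Proof. move=> hf hg; exact: (is_deriveD hf hg). Qed.

Lemma dN f t a : is_derive t 1 f a -> is_derive t 1 (fun r => - f r) (- a).
Proof. move=> hf; exact: (is_deriveN hf). Qed.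

Lemma dB f g t a b : is_derive t 1 f a -> is_derive t 1 g b ->
  is_derive t 1 (fun r => f r - g r) (a - b).
Proof. move=> hf hg; exact: (is_deriveB hf hg). Qed.

Lemma dM f g t a b : is_derive t 1 f a -> is_derive t 1 g b ->
  is_derive t 1 (fun r => f r * g r) (f t * b + g t * a).
Proof. move=> hf hg; exact: (is_deriveM hf hg). Qed.

Lemma dcst t c : is_derive t 1 (fun _ : R => c) 0.
Proof. exact: is_derive_cst. Qed.

Lemma did t : is_derive t 1 (fun r : R => r) 1.
Proof. exact: is_derive_id. Qed.

Lemma dval f t a b : is_derive t 1 f a -> a = b -> is_derive t 1 f b.
Proof. by move=> h <-. Qed.

Lemma dsqrt g t b : is_derive t 1 g b -> 0 < g t ->
  is_derive t 1 (fun r => Num.sqrt (g r)) ((2 * Num.sqrt (g t))^-1 * b).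
Proof. move=> hg g0; exact: (is_derive1_comp (is_derive1_sqrt g0) hg). Qed.

Lemma dexp g t b : is_derive t 1 g b ->
  is_derive t 1 (fun r => expR (g r)) (expR (g t) * b).
Proof. move=> hg; exact: (is_derive1_comp (is_derive_expR _) hg). Qed.

Lemma dsum n (h : 'I_n -> R -> R) t (dh : 'I_n -> R) :
  (forall i, is_derive t 1 (h i) (dh i)) ->
  is_derive t 1 (fun r => \sum_(i < n) h i r) (\sum_(i < n) dh i).
Proof. move=> hd; rewrite -fct_sumE; exact: is_derive_sum. Qed.

Definition CD p (f : R -> 'cV[R]_p) t (df : 'cV[R]_p) :=
  forall i, is_derive t 1 (fun r => f r i 0) (df i 0).

Lemma CD_add p (f g : R -> 'cV[R]_p) t df dg : CD f t df -> CD g t dg ->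
  CD (fun r => f r + g r) t (df + dg).
Proof.
move=> hf hg i; rewrite mxE.
have -> : (fun r => (f r + g r) i 0) = (fun r => f r i 0 + g r i 0).
  by apply/funext => r; rewrite mxE.
exact: dD.
Qed.

Lemma CD_opp p (f : R -> 'cV[R]_p) t df : CD f t df -> CD (fun r => - f r) t (- df).
Proof.
move=> hf i; rewrite mxE.
have -> : (fun r => (- f r) i 0) = (fun r => - f r i 0).
  by apply/funext => r; rewrite mxE.
exact: dN.
Qed.

Lemma CD_sub p (f g : R -> 'cV[R]_p) t df dg : CD f t df -> CD g t dg ->
  CD (fun r => f r - g r) t (df - dg).
Proof. move=> hf hg; exact: CD_add hf (CD_opp hg). Qed.

Lemma CD_cst p (c : 'cV[R]_p) t : CD (fun _ => c) t 0.
Proof. move=> i; rewrite mxE; exact: dcst. Qed.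

Lemma CD_mul p q (M : 'M[R]_(q, p)) (f : R -> 'cV[R]_p) t df : CD f t df ->
  CD (fun r => M *m f r) t (M *m df).
Proof.
move=> hf i; rewrite mxE.
have -> : (fun r => (M *m f r) i 0) = (fun r => \sum_j (M i j * f r j 0)).
  by apply/funext => r; rewrite mxE.
apply: dsum => j; apply: dval (dM (dcst t (M i j)) (hf j)) _.
by rewrite mulr0 addr0.
Qed.

Lemma CD_dot p (f g : R -> 'cV[R]_p) t df dg : CD f t df -> CD g t dg ->
  is_derive t 1 (fun r => dotv (f r) (g r)) (dotv df (g t) + dotv (f t) dg).
Proof.
move=> hf hg.
have -> : (fun r => dotv (f r) (g r)) = (fun r => \sum_i f r i 0 * g r i 0).
  by apply/funext => r; rewrite dotvE.
rewrite !dotvE -big_split /=; apply: dsum => i.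
by apply: dval (dM (hf i) (hg i)) _; rewrite addrC mulrC [g t i 0 * _]mulrC.
Qed.

Section WC.
Variable A : set R.
Lemma wcD f g : {within A, continuous f} -> {within A, continuous g} ->
  {within A, continuous (fun r => f r + g r)}.
Proof. move=> hf hg x; apply: cvgD; [exact: hf | exact: hg]. Qed.
Lemma wcN f : {within A, continuous f} -> {within A, continuous (fun r => - f r)}.
Proof. move=> hf x; apply: cvgN; exact: hf. Qed.
Lemma wcB f g : {within A, continuous f} -> {within A, continuous g} ->
  {within A, continuous (fun r => f r - g r)}.
Proof. move=> hf hg x; apply: cvgB; [exact: hf | exact: hg]. Qed.
Lemma wcM f g : {within A, continuous f} -> {within A, continuous g} ->
  {within A, continuous (fun r => f r * g r)}.
Proof. move=> hf hg x; apply: cvgM; [exact: hf | exact: hg]. Qed.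
Lemma wc_cst c : {within A, continuous (fun _ : R => c)}.
Proof. move=> x; exact: cvg_cst. Qed.
Lemma wc_id : {within A, continuous (fun r : R => r)}.
Proof. apply: continuous_subspaceT => x; exact: cvg_id. Qed.
Lemma wc_comp f (h : R -> R) : {within A, continuous f} -> continuous h ->
  {within A, continuous (fun r => h (f r))}.
Proof. move=> hf hc x; apply: (@continuous_cvg _ _ _ _ _ f h); [exact: nbhs_subspace_filter | exact: hc | exact: hf]. Qed.
Lemma wc_sum n (h : 'I_n -> R -> R) : (forall i, {within A, continuous (h i)}) ->
  {within A, continuous (fun r => \sum_(i < n) h i r)}.
Proof. move=> hh x; apply: cvg_sum_ord => i; exact: hh. Qed.

Definition CC p (f : R -> 'cV[R]_p) := forall i, {within A, continuous (fun r => f r i 0)}.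

Lemma CC_add p (f g : R -> 'cV[R]_p) : CC f -> CC g -> CC (fun r => f r + g r).
Proof.
move=> hf hg i.
have -> : (fun r => (f r + g r) i 0) = (fun r => f r i 0 + g r i 0).
  by apply/funext => r; rewrite mxE.
exact: wcD.
Qed.
Lemma CC_opp p (f : R -> 'cV[R]_p) : CC f -> CC (fun r => - f r).
Proof.
move=> hf i.
have -> : (fun r => (- f r) i 0) = (fun r => - f r i 0).
  by apply/funext => r; rewrite mxE.
exact: wcN.
Qed.
Lemma CC_sub p (f g : R -> 'cV[R]_p) : CC f -> CC g -> CC (fun r => f r - g r).
Proof. move=> hf hg; exact: CC_add hf (CC_opp hg). Qed.
Lemma CC_cst p (c : 'cV[R]_p) : CC (fun _ => c).
Proof. move=> i; exact: wc_cst. Qed.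
Lemma CC_mul p q (M : 'M[R]_(q, p)) (f : R -> 'cV[R]_p) : CC f -> CC (fun r => M *m f r).
Proof.
move=> hf i.
have -> : (fun r => (M *m f r) i 0) = (fun r => \sum_j (M i j * f r j 0)).
  by apply/funext => r; rewrite mxE.
apply: wc_sum => j; apply: wcM; [exact: wc_cst | exact: hf].
Qed.
Lemma wc_dot p (f g : R -> 'cV[R]_p) : CC f -> CC g ->
  {within A, continuous (fun r => dotv (f r) (g r))}.
Proof.
move=> hf hg.
have -> : (fun r => dotv (f r) (g r)) = (fun r => \sum_i f r i 0 * g r i 0).
  by apply/funext => r; rewrite dotvE.
apply: wc_sum => i; apply: wcM; [exact: hf | exact: hg].
Qed.
End WC.

Lemma CC_sub_set (A B : set R) p (f : R -> 'cV[R]_p) : A `<=` B -> CC B f -> CC A f.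
Proof. move=> AB hf i; exact: continuous_subspaceW AB (hf i). Qed.

Lemma nonincr_itv (h : R -> R) a b : a <= b ->
  (forall x, a < x < b -> exists2 d, is_derive x 1 h d & d <= 0) ->
  {within `[a, b], continuous h} ->
  forall t, a <= t <= b -> h t <= h a.
Proof.
move=> ab hd hc t /andP[ha hb].
apply: (@ler0_derive1_le_cc _ h a b) => //.
- move=> x; rewrite in_itv /= => /hd [d dd _]; exact: ex_derive.
- move=> x; rewrite in_itv /= => /hd [d dd d0]; by rewrite derive1E (@derive_val _ _ _ _ _ _ _ dd).
all: try by rewrite in_itv /= lexx ab.
all: try by rewrite in_itv /= ha hb.
Qed.

Lemma le_of_eps (x y c : R) : 0 <= c -> (forall e, 0 < e -> x <= y + e * c) -> x <= y.
Proof.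
move=> c0 h; apply/ler_addgt0Pr => e e0.
have c1 : 0 < c + 1 by lra.
have h1 := h (e / (c + 1)) (divr_gt0 e0 c1).
apply: (le_trans h1); rewrite lerD2l mulrAC ler_pdivrMr //; nra.
Qed.
End AN.


Section ST1.
Variable R : realType.

Lemma delta_bound p (A0 : 'M[R]_p) (delta w : R -> 'cV[R]_p) (c0 c1 kap : R) :
  0 < Smax A0 -> 0 <= kap ->
  CC [set r | c0 <= r < c1] delta ->
  (forall t, c0 < t < c1 -> CD delta t (A0 *m delta t + w t)) ->
  (forall t, c0 < t < c1 -> vnorm (w t) <= kap) ->
  delta c0 = 0 ->
  forall t, c0 <= t < c1 ->
    vnorm (delta t) <= kap / Smax A0 * (expR (Smax A0 * (t - c0)) - 1).
Proof.
move=> S0 k0 hc hd hw d0 t /andP[t0 t1].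
set S := Smax A0 in S0 *.
set E := expR (S * (t - c0)).
have E1 : 1 <= E by rewrite /E -expR0 ler_expR mulr_ge0 ?subr_ge0 // ltW.
apply: (le_of_eps (c := E)); first lra.
move=> eta eta0.
pose zeta r := Num.sqrt (dotv (delta r) (delta r) + eta ^+ 2).
pose h r := (zeta r + kap / S) * expR (- S * (r - c0)).
have hle : h t <= h c0.
  apply: (@nonincr_itv _ h c0 t) => //; last by rewrite lexx t0.
    move=> x /andP[x0 x1].
    have xin : c0 < x < c1 by rewrite x0 (lt_le_trans x1) // ltW.
    have dd := hd x xin.
    have pos : 0 < dotv (delta x) (delta x) + eta ^+ 2.
      by rewrite ltr_wpDl ?dotvv_ge0 // exprn_gt0.
    have Dz := dsqrt (dD (CD_dot dd dd) (dcst x (eta ^+ 2))) pos.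
    have De := dexp (dM (dcst x (- S)) (dB (did x) (dcst x c0))).
    have Dh := dM (dD Dz (dcst x (kap / S))) De.
    eexists; first exact: Dh.
    rewrite (dotvC (A0 *m delta x + w x) (delta x)).
    set Z := Num.sqrt _; set G := expR _; set Dt := dotv (delta x) _.
    have Z0 : 0 < Z by rewrite sqrtr_gt0.
    have G0 : 0 < G by exact: expR_gt0.
    have key : Dt <= Z * (S * Z + kap).
      have h1 : dotv (delta x) (A0 *m delta x) <= vnorm (delta x) * (S * vnorm (delta x)).
        exact: le_trans (ler_norm _) (dot_bound _ _ _).
      have h2 : dotv (delta x) (w x) <= vnorm (delta x) * kap.
        apply: le_trans (ler_norm _) _; apply: le_trans (CS _ _) _.
        by apply: ler_wpM2l; [exact: vnorm_ge0 | exact: hw].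
      have h3 : vnorm (delta x) <= Z.
        by rewrite vnorm_dot /Z ler_sqrt ?lerDl ?sqr_ge0 // ltW.
      have h4 := vnorm_ge0 (delta x).
      have h5 : vnorm (delta x) * (S * vnorm (delta x)) <= Z * (S * Z).
        by apply: ler_pM => //; rewrite ?mulr_ge0 ?ler_wpM2l // ltW.
      have h6 : vnorm (delta x) * kap <= Z * kap by rewrite ler_wpM2r.
      rewrite /Dt dotvDr; lra.
    have -> : (Z + kap / S) * (G * (- S * (1 - 0) + (x - c0) * 0)) +
        G * ((2 * Z)^-1 * (Dt + Dt + 0) + 0) = G * (Dt / Z - (S * Z + kap)).
      by field; rewrite !gt_eqF.
    by rewrite pmulr_rle0 // subr_le0 ler_pdivrMr // mulrC.
  have hcc : CC `[c0, t] delta.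
    apply: CC_sub_set hc => r /=; rewrite in_itv /= => /andP[a b].
    by rewrite a (le_lt_trans b t1).
  apply: wcM; last first.
    apply: wc_comp; last exact: continuous_expR.
    apply: wcM; first exact: wc_cst.
    by apply: wcB; [exact: wc_id | exact: wc_cst].
  apply: wcD; last exact: wc_cst.
  apply: wc_comp; last exact: sqrt_continuous.
  by apply: wcD; [exact: (wc_dot hcc hcc) | exact: wc_cst].
move: hle; rewrite /h /zeta d0 dotv0l add0r sqrtr_sqr gtr0_norm // subrr mulr0 expR0 mulr1.
rewrite mulNr expRN -/E.
have E0 : 0 < E by lra.
rewrite ler_pdivrMr // => hle.
have h3 : vnorm (delta t) <= Num.sqrt (dotv (delta t) (delta t) + eta ^+ 2).
  by rewrite vnorm_dot ler_sqrt ?lerDl ?sqr_ge0 // addr_ge0 ?dotvv_ge0 ?sqr_ge0.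
set K := kap / S in hle *.
set Z := Num.sqrt _ in hle h3.
nra.
Qed.

Lemma riccati_id p q (A P : 'M[R]_p) (B : 'M[R]_(p, q)) (k : R) (e dl xg dd : 'cV[R]_p) :
  P^T = P -> A^T *m P + P *m A - 2 *: (P *m B *m B^T *m P) + k%:M = 0 ->
  2 * dotv e (P *m (- (A *m (xg - e) + B *m (B^T *m P *m (e + dl)) + dd))) =
  - k * dotv e e - 2 * dotv e ((P *m B *m B^T *m P) *m dl)
  - 2 * dotv e ((P *m A) *m xg) - 2 * dotv e (P *m dd).
Proof.
move=> Psym ric.
have hA : dotv e ((P *m A) *m e) = dotv e ((A^T *m P) *m e).
  by rewrite dotv_mulmx trmx_mul Psym dotvC.
have hM : A^T *m P + P *m A = 2 *: (P *m B *m B^T *m P) - k%:M.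
  apply/matrixP => i j; have := congr1 (fun M : 'M[R]_p => M i j) ric; rewrite !mxE => h; lra.
have hR : dotv e ((A^T *m P) *m e) + dotv e ((P *m A) *m e) =
    2 * dotv e ((P *m B *m B^T *m P) *m e) - k * dotv e e.
  by rewrite -dotvDr -mulmxDl hM mulmxBl -scalemxAl mul_scalar_mx dotvBr !dotvZr.
rewrite !(mulmxN, mulmxDr, mulmxBr, dotvNr, dotvDr, dotvBr) !mulmxA.
rewrite -!mulmxA; rewrite -!mulmxA in hA hR; lra.
Qed.

Lemma neg_dot_bound p q (M : 'M[R]_(p, q)) (e : 'cV[R]_p) (v : 'cV[R]_q) (c : R) :
  vnorm v <= c -> - dotv e (M *m v) <= vnorm e * (Smax M * c).
Proof.
move=> vc; apply: le_trans (_ : `|dotv e (M *m v)| <= _).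
  by rewrite -normrN ler_norm.
apply: le_trans (dot_bound _ _ _) _; apply: ler_wpM2l; first exact: vnorm_ge0.
by apply: ler_wpM2l; [rewrite /Smax sqrtr_ge0 | ].
Qed.

Lemma riccati_bound p q (A P : 'M[R]_p) (B : 'M[R]_(p, q)) (k VT xgbar dbar : R)
    (e dl xg dd : 'cV[R]_p) :
  P^T = P -> A^T *m P + P *m A - 2 *: (P *m B *m B^T *m P) + k%:M = 0 ->
  vnorm dl <= VT -> vnorm xg <= xgbar -> vnorm dd <= dbar ->
  2 * dotv e (P *m (- (A *m (xg - e) + B *m (B^T *m P *m (e + dl)) + dd))) <=
  - k * dotv e e + (2 * dbar * Smax P + 2 * VT * Smax (P *m B *m B^T *m P)
             + 2 * Smax (P *m A) * xgbar) * vnorm e.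
Proof.
move=> Psym ric h1 h2 h3; rewrite (riccati_id _ _ _ _ Psym ric).
have t1 := neg_dot_bound (P *m B *m B^T *m P) e h1.
have t2 := neg_dot_bound (P *m A) e h2.
have t3 := neg_dot_bound P e h3.
nra.
Qed.

Lemma W_deriv_bound (k lM L rho eta a Vv D : R) :
  0 < k -> 0 < lM -> 0 < L -> 0 <= rho -> 0 < eta -> 0 <= a ->
  L ^+ 2 * a ^+ 2 <= Vv -> Vv <= lM * a ^+ 2 ->
  D <= - k * a ^+ 2 + rho * a ->
  (2 * Num.sqrt (Vv + eta ^+ 2))^-1 * D <=
    - (k / (2 * lM)) * Num.sqrt (Vv + eta ^+ 2) + (rho / (2 * L) + k / (2 * lM) * eta).
Proof.
move=> k0 lM0 L0 r0 e0 a0 hl hu hD.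
have V0 : 0 <= Vv by apply: le_trans hl; rewrite mulr_ge0 ?sqr_ge0.
set W := Num.sqrt _.
have W0 : 0 < W by rewrite sqrtr_gt0 ltr_wpDl ?exprn_gt0.
have W2 : W ^+ 2 = Vv + eta ^+ 2 by rewrite sqr_sqrtr // addr_ge0 ?sqr_ge0.
have eW : eta <= W.
  by rewrite -(ger0_norm (ltW e0)) -sqrtr_sqr ler_sqrt ?lerDr // addr_ge0 ?sqr_ge0.
have aW : a * L <= W.
  rewrite -(ger0_norm (mulr_ge0 a0 (ltW L0))) -sqrtr_sqr ler_sqrt ?addr_ge0 ?sqr_ge0 //.
  by rewrite exprMn mulrC (le_trans hl) // lerDl sqr_ge0.
set c := k / (2 * lM).
have c0 : 0 < c by rewrite divr_gt0 // mulr_gt0.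
set r2 := rho / (2 * L).
have f1 : 2 * c * Vv <= k * a ^+ 2.
  have -> : 2 * c = k / lM by rewrite /c; field; rewrite gt_eqF.
  rewrite mulrAC ler_pdivrMr //; nra.
have f2 : rho * a <= 2 * r2 * W.
  have -> : 2 * r2 = rho / L by rewrite /r2; field; rewrite gt_eqF.
  by rewrite -mulrA ler_wpM2l // ler_pdivlMl // mulrC.
have f3 : c * eta ^+ 2 <= c * eta * W.
  by rewrite expr2 mulrA; apply: ler_wpM2l => //; rewrite mulr_ge0 // ltW.
have f4 : c * W ^+ 2 = c * Vv + c * eta ^+ 2 by rewrite W2 mulrDr.
rewrite mulrC ler_pdivrMr ?mulr_gt0 //.
nra.
Qed.
End ST1.


Section ST2.
Variable R : realType.

Lemma ts_ge0 (ts : nat -> R) : ts 0%N = 0 -> (forall s, ts s < ts s.+1) ->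
  forall s, 0 <= ts s.
Proof.
move=> t0 ti; elim=> [|s IH]; first by rewrite t0.
exact: le_trans IH (ltW (ti s)).
Qed.

Lemma ts_locate (ts : nat -> R) : ts 0%N = 0 -> (forall s, ts s < ts s.+1) ->
  (forall M : R, exists N : nat, forall s, (N <= s)%N -> M <= ts s) ->
  forall t, 0 <= t -> exists s, ts s <= t < ts s.+1.
Proof.
move=> t0 ti tu t tge.
have [N hN] := tu (t + 1).
have : t < ts N by apply: lt_le_trans (hN N (leqnn N)); lra.
elim: N {hN} => [|N IH]; first by rewrite t0 => /lt_le_trans /(_ tge); rewrite ltxx.
move=> tN; have [tN'|Nt] := ltP t (ts N); first exact: IH.
by exists N; rewrite Nt tN.
Qed.

Lemma ts_glue (ts : nat -> R) (g : R -> R) : ts 0%N = 0 -> (forall s, ts s < ts s.+1) ->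
  (forall M : R, exists N : nat, forall s, (N <= s)%N -> M <= ts s) ->
  (forall s t, ts s <= t <= ts s.+1 -> g t <= g (ts s)) ->
  forall t, 0 <= t -> g t <= g 0.
Proof.
move=> t0 ti tu hg t tge.
have [N hN] := tu t.
have : t <= ts N := hN N (leqnn N).
have tsge := ts_ge0 t0 ti.
elim: N {hN} t tge => [|N IH] t tge.
  by rewrite t0 => tle; have -> : t = 0 by apply/eqP; rewrite eq_le tle tge.
move=> tN; have [tN'|Nt] := leP t (ts N); first exact: IH.
apply: le_trans (hg N t _) _; first by rewrite (ltW Nt) tN.
exact: IH (tsge N) (lexx _).
Qed.

Lemma final_arith (k lM lm rho eta t a a0 Vt V0 : R) :
  0 < k -> 0 < lm -> lm <= lM -> 0 <= rho -> 0 < eta -> 0 <= t -> 0 <= a -> 0 <= a0 ->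
  lm * a ^+ 2 <= Vt -> V0 <= lM * a0 ^+ 2 -> 0 <= V0 ->
  (Num.sqrt (Vt + eta ^+ 2) - (rho / (2 * Num.sqrt lm) + k / (2 * lM) * eta) / (k / (2 * lM)))
    * expR (k / (2 * lM) * t) <=
  (Num.sqrt (V0 + eta ^+ 2) - (rho / (2 * Num.sqrt lm) + k / (2 * lM) * eta) / (k / (2 * lM)))
    * expR (k / (2 * lM) * 0) ->
  a <= lM * rho / (lm * k) * (1 - expR (- (k / (2 * lM)) * t))
       + Num.sqrt (lM / lm) * a0 * expR (- (k / (2 * lM)) * t) + eta * (Num.sqrt lm)^-1.
Proof.
move=> k0 lm0 lml r0 e0 t0 a0' a00 hVt hV0 V00.
have lM0 : 0 < lM by exact: lt_le_trans lml.
set L := Num.sqrt lm; set c := k / (2 * lM).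
have L0 : 0 < L by rewrite sqrtr_gt0.
have c0 : 0 < c by rewrite divr_gt0 // mulr_gt0.
have LL : L ^+ 2 = lm by rewrite sqr_sqrtr // ltW.
set F := expR (- c * t).
have F0 : 0 < F by exact: expR_gt0.
have F1 : F <= 1 by rewrite /F expR_le1 mulNr oppr_le0 mulr_ge0 // ltW.
have EF : expR (c * t) * F = 1 by rewrite /F -expRD mulNr addrN expR0.
rewrite mulr0 expR0 mulr1.
set Kc := (_ + _) / c.
have hKc : Kc = lM * rho / (lm * k) * L + eta.
  rewrite /Kc /c -LL; field; rewrite !gt_eqF // ?mulr_gt0 // ?exprn_gt0.
set Wt := Num.sqrt (Vt + _); set W0 := Num.sqrt (V0 + _).
move=> hg.
have hW : Wt <= Kc + (W0 - Kc) * F.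
  have := ler_wpM2r (ltW F0) hg; rewrite -mulrA EF mulr1 => h; nra.
have hWt : L * a <= Wt.
  rewrite -(ger0_norm (mulr_ge0 (ltW L0) a0')) -sqrtr_sqr ler_sqrt ?addr_ge0 ?sqr_ge0 //.
    by rewrite exprMn LL (le_trans hVt) // lerDl sqr_ge0.
  by apply: le_trans hVt; rewrite mulr_ge0 ?sqr_ge0 // ltW.
have hW0 : W0 <= Num.sqrt lM * a0 + eta.
  have h1 : 0 <= Num.sqrt lM * a0 + eta by rewrite addr_ge0 ?mulr_ge0 ?sqrtr_ge0 // ltW.
  rewrite -(ger0_norm h1) -sqrtr_sqr ler_sqrt ?sqr_ge0 //.
  have h2 : (Num.sqrt lM * a0) ^+ 2 = lM * a0 ^+ 2 by rewrite exprMn sqr_sqrtr // ltW.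
  have h3 : 0 <= Num.sqrt lM * a0 * eta by rewrite !mulr_ge0 ?sqrtr_ge0 // ltW.
  rewrite sqrrD h2; lra.
have hsq : Num.sqrt (lM / lm) = Num.sqrt lM / L.
  by rewrite sqrtrM ?sqrtrV // ltW.
rewrite hsq.
have main : L * a <= (lM * rho / (lm * k) * L) * (1 - F) + Num.sqrt lM * a0 * F + eta.
  rewrite hKc in hW; nra.
rewrite -(ler_pM2l L0).
have -> : L * (lM * rho / (lm * k) * (1 - F) + Num.sqrt lM / L * a0 * F + eta * L^-1) =
    (lM * rho / (lm * k) * L) * (1 - F) + Num.sqrt lM * a0 * F + eta.
  by field; rewrite !gt_eqF.
exact: main.
Qed.
End ST2.


Lemma lambda_max_0 (R : realType) (M : 'M[R]_0) : lambda_max M = 0.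
Proof.
rewrite /lambda_max.
have -> : [set a : R | eigenvalue M a] = set0.
  apply/seteqP; split => a /=; last by [].
  move=> /eigenvalueP [v _ vn]; move: vn.
  have -> : v = 0 by apply/matrixP => i [j Hj]; exfalso; rewrite ltn0 in Hj.
  by rewrite eqxx.
exact: sup0.
Qed.

Lemma val_le0 (R : realType) (W K c G Wd y : R) : 0 < c -> 0 < G ->
  Wd <= - c * W + K -> (W - K / c) * (G * (c * 1 + y * 0)) + G * (Wd - 0) <= 0.
Proof.
move=> c0 G0 h.
have -> : (W - K / c) * (G * (c * 1 + y * 0)) + G * (Wd - 0) = G * (Wd - (- c * W + K)).
  by field; rewrite gt_eqF.
by rewrite pmulr_rle0 // subr_le0.
Qed.

Lemma CD_eq (R : realType) p (f : R -> 'cV[R]_p) t v v' : CD f t v -> v = v' -> CD f t v'.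
Proof. by move=> h <-. Qed.

Unset Implicit Arguments.
Set Strict Implicit.
Set Printing Implicit Defensive.

Theorem theorem3 (R : realType) (m n : nat)
  (A : 'M[R]_m) (B : 'M[R]_(m, n)) (P : 'M[R]_m) (k : R)
  (xg : 'cV[R]_m) (xgbar dbar VT : R)
  (d x xh : R -> 'cV[R]_m) (u : R -> 'cV[R]_n) (ts : nat -> R) :
  0 < Smax A ->
  0 < k ->
  (* P symmetric positive definite solving the Riccati equation *)
  P^T = P ->
  (forall v : 'cV[R]_m, v != 0 -> 0 < (v^T *m P *m v) 0 0) ->
  A^T *m P + P *m A - 2 *: (P *m B *m B^T *m P) + k%:M = 0 ->
  (* goal and disturbance *)
  vnorm xg <= xgbar ->
  (forall i : 'I_m, {within [set t : R | 0 <= t], continuous (fun t => d t i 0)}) ->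
  (forall t, 0 <= t -> vnorm (d t) <= dbar) ->
  (* servicing instants *)
  ts 0%N = 0 ->
  (forall s, ts s < ts s.+1) ->
  (forall M : R, exists N : nat, forall s, (N <= s)%N -> M <= ts s) ->
  (* controller *)
  (forall t, 0 <= t -> u t = B^T *m P *m (xg - xh t)) ->
  (* plant: x continuous on [0,oo), solves the ODE between servicing instants *)
  (forall i : 'I_m, {within [set t : R | 0 <= t], continuous (fun t => x t i 0)}) ->
  (forall s t, ts s < t < ts s.+1 -> forall i : 'I_m,
      is_derive t 1 (fun r => x r i 0) ((A *m x t + B *m u t + d t) i 0)) ->
  (* estimator: right-continuous, reset at servicing instants *)
  (forall s (i : 'I_m),
      {within [set t : R | ts s <= t < ts s.+1], continuous (fun t => xh t i 0)}) ->
  (forall s t, ts s < t < ts s.+1 -> forall i : 'I_m,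
      is_derive t 1 (fun r => xh r i 0) ((- (A *m (xg - xh t)) + B *m u t) i 0)) ->
  (forall s, xh (ts s) = x (ts s)) ->
  (* servicing condition *)
  0 < VT ->
  (forall s, 0 < Smax A * xgbar + dbar ->
     ts s.+1 - ts s <= (Smax A)^-1 * ln (VT * Smax A / (Smax A * xgbar + dbar) + 1)) ->
  let rho := 2 * dbar * Smax P + 2 * VT * Smax (P *m B *m B^T *m P)
             + 2 * Smax (P *m A) * xgbar in
  (forall t, 0 <= t ->
     vnorm (xg - x t) <=
       lambda_max P * rho / (lambda_min P * k)
         * (1 - expR (- (k / (2 * lambda_max P)) * t))
       + Num.sqrt (lambda_max P / lambda_min P) * vnorm (xg - x 0)
         * expR (- (k / (2 * lambda_max P)) * t))
  /\ (exists M : R, forall t, 0 <= t ->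
        [/\ vnorm (xg - x t) <= M, vnorm (xg - xh t) <= M & vnorm (u t) <= M]).
Proof.
case: m A B P xg d x xh => [|m] A B P xg d x xh.
  by rewrite /Smax lambda_max_0 sqrtr0 ltxx.
move=> SA0 k0 Psym Ppd ric hxg dcont dbd ts0 tsinc tsunb hu xcont xder xhcont
  xhder xhreset VT0 hserv rho.
set S := Smax A in SA0 hserv.
set kap := S * xgbar + dbar in hserv.
have xg0 : 0 <= xgbar := le_trans (vnorm_ge0 _) hxg.
have db0 : 0 <= dbar := le_trans (vnorm_ge0 _) (dbd 0 (lexx 0)).
have kap0 : 0 <= kap by rewrite addr_ge0 // mulr_ge0 // ltW.
have tsge := ts_ge0 ts0 tsinc.
have lm0 : 0 < lambda_min P := lmin_pos (ltn0Sn m) Psym Ppd.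
have lml : lambda_min P <= lambda_max P := lmin_le_lmax (ltn0Sn m) Psym.
have Sge : forall p q (M : 'M[R]_(p, q)), 0 <= Smax M by move=> *; rewrite /Smax sqrtr_ge0.
have rho0 : 0 <= rho by rewrite /rho !addr_ge0 ?mulr_ge0 // ltW.
have dl_bd : forall s t, ts s <= t < ts s.+1 -> vnorm (x t - xh t) <= VT.
  move=> s t ht.
  have hb := @delta_bound R _ A (fun r => x r - xh r) (fun r => A *m xg + d r)
    (ts s) (ts s.+1) kap SA0 kap0.
  have sub0 : [set r | ts s <= r < ts s.+1] `<=` [set r : R | 0 <= r].
    by move=> r /andP[r1 _]; exact: le_trans (tsge s) r1.
  have H := hb (CC_sub (CC_sub_set sub0 xcont) (xhcont s)).
  have d0 : x (ts s) - xh (ts s) = 0 by rewrite xhreset subrr.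
  have hder : forall r, ts s < r < ts s.+1 ->
      CD (fun r : R => x r - xh r) r (A *m (x r - xh r) + (A *m xg + d r)).
    move=> r hr; apply: CD_eq (CD_sub (xder s r hr) (xhder s r hr)) _.
    rewrite !mulmxBr; apply/matrixP => i j; rewrite !mxE; lra.
  have rpos : forall r, ts s < r -> 0 <= r.
    by move=> r hr; apply: le_trans (tsge s) (ltW hr).
  have hw : forall r, ts s < r < ts s.+1 -> vnorm (A *m xg + d r) <= kap.
    move=> r /andP[hr _]; apply: le_trans (vnormD _ _) _.
    have h1 := Smax_bound A xg; have h2 := dbd r (rpos r hr).
    have h3 : S * vnorm xg <= S * xgbar by rewrite ler_wpM2l // ltW.
    rewrite /kap; rewrite -/S in h1; lra.
  have {H} H := H hder hw d0 t ht; rewrite -/S in H.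
  apply: le_trans H _.
  have [kz|kn] := eqVneq kap 0; first by rewrite kz !mul0r; exact: ltW.
  have kp : 0 < kap by rewrite lt_def kn kap0.
  have hs := hserv s kp.
  case/andP: ht => ht1 ht2.
  have hE : expR (S * (t - ts s)) <= VT * S / kap + 1.
    have pos : 0 < VT * S / kap + 1 by rewrite ltr_wpDl // divr_ge0 // ?mulr_ge0 // ltW.
    rewrite -(lnK pos) ler_expR.
    apply: le_trans (_ : S * (ts s.+1 - ts s) <= _).
      by apply: ler_wpM2l; [exact: ltW | lra].
    by have := ler_wpM2l (ltW SA0) hs; rewrite mulrA divff ?gt_eqF // mul1r.
  have h1 : expR (S * (t - ts s)) - 1 <= VT * S / kap by lra.
  apply: le_trans (ler_wpM2l (divr_ge0 kap0 (ltW SA0)) h1) _.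
  have -> : kap / S * (VT * S / kap) = VT by field; rewrite !gt_eqF.
  by [].
set lM := lambda_max P in lml *; set lm := lambda_min P in lm0 lml *.
have lM0 : 0 < lM := lt_le_trans lm0 lml.
pose e := fun r => xg - x r.
have CCe : CC [set r : R | 0 <= r] e := CC_sub (@CC_cst R [set r : R | 0 <= r] _ xg) xcont.
have eder : forall s t, ts s < t < ts s.+1 ->
    CD e t (- (A *m (xg - e t) + B *m (B^T *m P *m (e t + (x t - xh t))) + d t)).
  move=> s t ht; apply: CD_eq (CD_sub (CD_cst xg t) (xder s t ht)) _.
  have t0 : 0 <= t by case/andP: ht => h _; exact: le_trans (tsge s) (ltW h).
  rewrite hu // /e sub0r.
  have -> : xg - (xg - x t) = x t by rewrite opprB addrC subrK.
  by rewrite addrA subrK.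
have mainineq : forall t, 0 <= t ->
    vnorm (xg - x t) <=
       lM * rho / (lm * k) * (1 - expR (- (k / (2 * lM)) * t))
       + Num.sqrt (lM / lm) * vnorm (xg - x 0) * expR (- (k / (2 * lM)) * t).
  move=> t t0.
  apply: (le_of_eps (c := (Num.sqrt lm)^-1)); first by rewrite invr_ge0 sqrtr_ge0.
  move=> eta eta0.
  pose L := Num.sqrt lm; pose c := k / (2 * lM); pose K := rho / (2 * L) + c * eta.
  pose V := fun r => dotv (e r) (P *m e r).
  pose g := fun r => (Num.sqrt (V r + eta ^+ 2) - K / c) * expR (c * r).
  have L0 : 0 < L by rewrite sqrtr_gt0.
  have c0 : 0 < c by rewrite divr_gt0 // mulr_gt0.
  have hg : forall s t, ts s <= t <= ts s.+1 -> g t <= g (ts s).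
    move=> s; apply: nonincr_itv; first exact: ltW (tsinc s).
      move=> y hy.
      have hy' : ts s <= y < ts s.+1 by case/andP: hy => h1 h2; rewrite (ltW h1) h2.
      have dl := dl_bd s y hy'.
      have y0 : 0 <= y by case/andP: hy => h _; exact: le_trans (tsge s) (ltW h).
      have de := eder s y hy.
      have dV := CD_dot de (CD_mul P de).
      have Vge : lm * dotv (e y) (e y) <= V y := lmin_bound (ltn0Sn m) Psym (e y).
      have Vle : V y <= lM * dotv (e y) (e y) := lmax_bound (ltn0Sn m) Psym (e y).
      have pos : 0 < V y + eta ^+ 2.
        rewrite ltr_wpDl ?exprn_gt0 //; apply: le_trans Vge.
        by rewrite mulr_ge0 ?dotvv_ge0 // ltW.
      have dW := dsqrt (dD dV (dcst y (eta ^+ 2))) pos.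
      have dg := dM (dB dW (dcst y (K / c))) (dexp (dM (dcst y c) (did y))).
      eexists; first exact: dg.
      set ed := - (A *m _ + _ + _).
      have hsym : dotv ed (P *m e y) = dotv (e y) (P *m ed).
        by rewrite dotv_mulmx Psym dotvC.
      rewrite hsym.
      have hD := riccati_bound (e y) Psym ric dl hxg (dbd y y0).
      rewrite -/ed -/rho -vnorm_sq in hD.
      set Dd := dotv (e y) (P *m ed) in hD *.
      set ay := vnorm (e y) in hD *.
      have hD' : Dd + Dd + 0 <= - k * ay ^+ 2 + rho * ay.
        by rewrite addr0 -mulr2n -mulr_natl.
      have hl : L ^+ 2 * ay ^+ 2 <= V y.
        by rewrite /L sqr_sqrtr ?(ltW lm0) // /ay vnorm_sq.
      have hu' : V y <= lM * ay ^+ 2 by rewrite /ay vnorm_sq.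
      have hWb := W_deriv_bound k0 lM0 L0 rho0 eta0 (vnorm_ge0 _) hl hu' hD'.
      rewrite -/c -/K in hWb.
      set W := Num.sqrt _ in hWb *.
      have G0 : 0 < expR (c * y) by exact: expR_gt0.
      set G := expR (c * y) in G0 *.
      set Wd := (2 * W)^-1 * _ in hWb *.
      exact: val_le0 c0 G0 hWb.
    have CCe' : CC `[ts s, ts s.+1] e.
      apply: CC_sub_set CCe => r /=; rewrite in_itv /= => /andP[r1 _].
      exact: le_trans (tsge s) r1.
    rewrite /g /V; apply: wcM.
      apply: wcB; last exact: wc_cst.
      apply: wc_comp; last exact: sqrt_continuous.
      by apply: wcD; [exact: (wc_dot CCe' (CC_mul (M:=P) CCe')) | exact: wc_cst].
    apply: wc_comp; last exact: continuous_expR.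
    by apply: wcM; [exact: wc_cst | exact: wc_id].
  have hg0 := ts_glue ts0 tsinc tsunb hg.
  have a0t := vnorm_ge0 (e t); have a00 := vnorm_ge0 (e 0).
  have hVt : lm * vnorm (e t) ^+ 2 <= V t.
    by rewrite vnorm_sq; exact: lmin_bound (ltn0Sn m) Psym (e t).
  have hV0 : V 0 <= lM * vnorm (e 0) ^+ 2.
    by rewrite vnorm_sq; exact: lmax_bound (ltn0Sn m) Psym (e 0).
  have V00 : 0 <= V 0.
    apply: le_trans (lmin_bound (ltn0Sn m) Psym (e 0)).
    by rewrite mulr_ge0 ?dotvv_ge0 // ltW.
  exact: (final_arith k0 lm0 lml rho0 eta0 t0 a0t a00 hVt hV0 V00 (hg0 t t0)).
split; first exact: mainineq.
set M1 := lM * rho / (lm * k) + Num.sqrt (lM / lm) * vnorm (xg - x 0).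
have Q0 : 0 <= lM * rho / (lm * k).
  by rewrite divr_ge0 ?mulr_ge0 // ltW.
have Z0 : 0 <= Num.sqrt (lM / lm) * vnorm (xg - x 0) by rewrite mulr_ge0 ?sqrtr_ge0 ?vnorm_ge0.
have M10 : 0 <= M1 by rewrite addr_ge0.
have eb : forall t, 0 <= t -> vnorm (xg - x t) <= M1.
  move=> t t0; apply: le_trans (mainineq t t0) _.
  set F := expR _.
  have F0 : 0 < F := expR_gt0 _.
  have F1 : F <= 1.
    by rewrite /F expR_le1 mulNr oppr_le0 mulr_ge0 // divr_ge0 ?mulr_ge0 // ltW.
  rewrite /M1; nra.
have ehb : forall t, 0 <= t -> vnorm (xg - xh t) <= M1 + VT.
  move=> t t0; have [s hs] := ts_locate ts0 tsinc tsunb t0.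
  have -> : xg - xh t = (xg - x t) + (x t - xh t) by rewrite addrA subrK.
  apply: le_trans (vnormD _ _) _; have := eb t t0; have := dl_bd s t hs; lra.
exists (M1 + VT + Smax (B^T *m P) * (M1 + VT)) => t t0.
have SB := Sge _ _ (B^T *m P).
have ub : vnorm (u t) <= Smax (B^T *m P) * (M1 + VT).
  rewrite hu //; apply: le_trans (Smax_bound _ _) _; apply: ler_wpM2l => //; exact: ehb.
have pos2 : 0 <= Smax (B^T *m P) * (M1 + VT) by rewrite mulr_ge0 // addr_ge0 // ltW.
split.
- have := eb t t0; lra.
- have := ehb t t0; lra.
- lra.
Qed.
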